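(* Let $K \ge 2$ and $n \ge 1$. For any pair of label assignments $\tilde\sigma, \sigma \in \{1,\ldots,K\}^n$, define the Hamming loss $H(\tilde\sigma,\sigma) = \sum_{i=1}^n I(\tilde\sigma_i \ne \sigma_i)$ and Binder's loss \[ B(\tilde\sigma,\sigma) = \sum_{1 \le i<j \le n} \Big[ I(\tilde\sigma_i \ne \tilde\sigma_j)\, I(\sigma_i = \sigma_j) + I(\tilde\sigma_i = \tilde\sigma_j)\, I(\sigma_i \ne \sigma_j) \Big]. \] Then \[ B(\tilde\sigma,\sigma) \le H(\tilde\sigma,\sigma)\Big( n - \tfrac{1}{2} H(\tilde\sigma,\sigma) \Big). \] Moreover, if $K = 2$, then $B(\tilde\sigma,\sigma) = H(\tilde\sigma,\sigma)\big(n - H(\tilde\sigma,\sigma)\big)$.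
   Context: $I(\cdot)$ denotes the indicator function. *)

(* Defs.v *)
From mathcomp Require Import all_boot all_order all_algebra.
Set Implicit Arguments. Unset Strict Implicit. Unset Printing Implicit Defensive.

(* Label assignments in {1..K}^n are finite functions 'I_n -> 'I_K
   (labels 0..K-1, a relabelling of 1..K). *)

Definition hamming (n K : nat) (st s : {ffun 'I_n -> 'I_K}) : nat :=
  \sum_(i < n) (st i != s i).

Definition binder (n K : nat) (st s : {ffun 'I_n -> 'I_K}) : nat :=
  \sum_(i < n) \sum_(j < n | i < j)
     ((st i != st j) * (s i == s j) + (st i == st j) * (s i != s j)).

(* Main.v *)
Require Import Defs.
From mathcomp Require Import all_boot all_order all_algebra.
From mathcomp Require Import ring lra.
Import Order.TTheory GRing.Theory Num.Theory.
Set Implicit Arguments.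
Local Open Scope ring_scope.

Lemma pt_gen K (a b c e : 'I_K) :
  (((a != b) * (c == e) + (a == b) * (c != e)) <= ((a != c) || (b != e)))%N.
Proof.
have [->|ac] := eqVneq a c; have [->|be] := eqVneq b e;
  rewrite ?eqxx ?orbT ?orTb /=; by do ![case: eqP => _].
Qed.

Lemma pt_two (a b c e : 'I_2) :
  (((a != b) * (c == e) + (a == b) * (c != e)) + 2 * (a != c) * (b != e)
   = (a != c) + (b != e))%N.
Proof.
by move: a b c e; do 4! case=> [[|[|?]] ?] //.
Qed.

Lemma sum_pairs n (g : 'I_n -> 'I_n -> rat) (sym : forall i j, g i j = g j i) :
  2 * \sum_(i < n) \sum_(j < n) ((i < j)%N%:R * g i j) = \sum_(i < n) \sum_(j < n) g i j - \sum_(i < n) g i i.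
Proof.
have E : \sum_(i < n) \sum_(j < n) g i j = \sum_(i < n) \sum_(j < n) ((i < j)%N%:R * g i j)
   + \sum_(i < n) \sum_(j < n) ((j < i)%N%:R * g i j) + \sum_(i < n) g i i.
  rewrite -!big_split /=; apply: eq_bigr => i _.
  rewrite -big_split /= (bigD1 i) //= [in RHS](bigD1 i) //= ltnn !mul0r !add0r ?addr0.
  rewrite addrC; congr (_ + _).
  apply: eq_bigr => j ji; rewrite -mulrDl.
  case: ltngtP => [_|_|h]; rewrite ?mul1r ?add0r ?addr0 //.
  by move: ji; rewrite (val_inj h) eqxx.
have F : \sum_(i < n) \sum_(j < n) ((j < i)%N%:R * g i j) = \sum_(i < n) \sum_(j < n) ((i < j)%N%:R * g i j) :> rat.
  by rewrite exchange_big /=; apply: eq_bigr => i _; apply: eq_bigr => j _; rewrite sym.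
rewrite E F; ring.
Qed.

Definition T n K (st s : {ffun 'I_n -> 'I_K}) (i j : 'I_n) : rat :=
  (((st i != st j) * (s i == s j) + (st i == st j) * (s i != s j))%N)%:R.
Definition D n K (st s : {ffun 'I_n -> 'I_K}) (i : 'I_n) : rat := (st i != s i)%:R.

Lemma binderE n K (st s : {ffun 'I_n -> 'I_K}) :
  ((binder st s)%:R : rat) = \sum_(i < n) \sum_(j < n) ((i < j)%N%:R * T st s i j).
Proof.
rewrite /binder natr_sum; apply: eq_bigr => i _.
rewrite natr_sum big_mkcond /=; apply: eq_bigr => j _.
by case: (i < j)%N; rewrite ?mul1r ?mul0r.
Qed.

Lemma hammingE n K (st s : {ffun 'I_n -> 'I_K}) :
  ((hamming st s)%:R : rat) = \sum_(i < n) D st s i.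
Proof. by rewrite /hamming natr_sum. Qed.

Lemma dsum n (d : 'I_n -> rat) x y z :
  \sum_(i < n) \sum_(j < n) (x * d i + y * d j + z * (d i * d j)) =
  (x + y) * n%:R * (\sum_(i < n) d i) + z * (\sum_(i < n) d i) ^+ 2.
Proof.
under eq_bigr => i _ do rewrite !big_split /= sumr_const card_ord -!mulr_sumr.
set h := \sum_(i < n) d i.
rewrite !big_split /= sumr_const card_ord sumrMnl -!mulr_sumr -!mulr_suml -/h.
clearbody h; rewrite -(mulr_natr (x * h)) -(mulr_natr (y * h)); ring.
Qed.

Lemma D01 n K (st s : {ffun 'I_n -> 'I_K}) i : D st s i * D st s i = D st s i.
Proof. by rewrite /D; case: (_ != _); rewrite ?mulr1 ?mulr0. Qed.

Lemma Dge0 n K (st s : {ffun 'I_n -> 'I_K}) i : 0 <= D st s i.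
Proof. by rewrite /D ler0n. Qed.

Unset Implicit Arguments.
Theorem theorem3 (K n : nat) (hK : (2 <= K)%N) (hn : (1 <= n)%N) :
  (forall st s : {ffun 'I_n -> 'I_K},
     ((binder st s)%:R : rat) <= (hamming st s)%:R * (n%:R - (hamming st s)%:R / 2))
  /\ (K = 2%N -> forall st s : {ffun 'I_n -> 'I_K},
     ((binder st s)%:R : rat) = (hamming st s)%:R * (n%:R - (hamming st s)%:R)).
Proof.
split.
  move=> st s; rewrite binderE hammingE.
  set g := fun i j => 1 * D st s i + 1 * D st s j + (-1) * (D st s i * D st s j).
  have le : \sum_(i < n) \sum_(j < n) ((i < j)%N%:R * T st s i j)
         <= \sum_(i < n) \sum_(j < n) ((i < j)%N%:R * g i j).
    apply: ler_sum => i _; apply: ler_sum => j _; apply: ler_wpM2l; first exact: ler0n.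
    have := pt_gen (st i) (st j) (s i) (s j).
    rewrite -(ler_nat rat) /T /g /D.
    by case: (st i != s i); case: (st j != s j); rewrite /= ?mul1r ?mulr1 ?mulr0 ?mul0r ?addr0 ?add0r ?mulN1r ?subrr.
  have sym : forall i j, g i j = g j i by move=> i j; rewrite /g; ring.
  have E := @sum_pairs n g sym.
  rewrite dsum in E.
  have Ed : \sum_(i < n) g i i = \sum_(i < n) D st s i.
    by apply: eq_bigr => i _; rewrite /g D01; ring.
  rewrite Ed in E.
  have h0 : 0 <= \sum_(i < n) D st s i by apply: sumr_ge0 => i _; apply: Dge0.
  move: le E h0.
  set L := \sum_(i < n) \sum_(j < n) _.
  clearbody L.
  move: (\sum_(i < n) \sum_(j < n) ((i < j)%N%:R * g i j)) (\sum_(i < n) D st s i) (n%:R : rat) => M h N.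
  rewrite expr2 => *; nra.
move=> K2; subst K => st s; rewrite binderE hammingE.
set g := fun i j => 1 * D st s i + 1 * D st s j + (-2) * (D st s i * D st s j).
have eq : \sum_(i < n) \sum_(j < n) ((i < j)%N%:R * T st s i j)
       = \sum_(i < n) \sum_(j < n) ((i < j)%N%:R * g i j).
  apply: eq_bigr => i _; apply: eq_bigr => j _; congr (_ * _).
  have := pt_two (st i) (st j) (s i) (s j).
  move/(congr1 (fun m : nat => m%:R : rat)); rewrite /T /g /D !natrD !natrM => H.
  rewrite -[LHS](addrK (2%:R * (st i != s i)%:R * (st j != s j)%:R)) H; ring.
have sym : forall i j, g i j = g j i by move=> i j; rewrite /g; ring.
have E := @sum_pairs n g sym.
rewrite dsum in E.
have Ed : \sum_(i < n) g i i = 0.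
  by rewrite big1 // => i _; rewrite /g D01; ring.
rewrite eq.
move: E; rewrite Ed.
move: (\sum_(i < n) \sum_(j < n) ((i < j)%N%:R * g i j)) (\sum_(i < n) D st s i) (n%:R : rat) => M h N.
rewrite expr2 => *; nra.
Qed.
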